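(* Let $C^*\ge10^6$ be the fixed constant of the context and let $\mathbf{A}\in[-1,1]^{m\times n}$ with $n\ge C^*\cdot m$. With probability at least $0.99$ over its random bits $\mathbf{r}$, the procedure $\textsc{ColumnReductionSampling}$ described in the context does not return $\bot$ and returns $\mathbf{x}_T\in[-1,1]^n$ with $|\{i\in[n]:|\mathbf{x}_T(i)|=1\}|=0.9n$ and $\|\mathbf{A}\mathbf{x}_T\|_\infty=0$. Moreover, for different random seeds $\mathbf{r}\neq\mathbf{r}'$, the outputs $\mathbf{x}_T$ and $\mathbf{x}'_T$ of the procedure on $\mathbf{r}$ and $\mathbf{r}'$ differ on some entry $i$ at which both lie in $\{\pm1\}$.
   Context: Leverage scores: for a linear subspace $H\subseteq\mathbb{R}^S$ and $i\in S$, $\tau_i(H)=\max_{\mathbf{u}\in H\setminus\{0\}}\mathbf{u}(i)^2/\|\mathbf{u}\|_2^2$. If $\psi_1,\dots,\psi_d$ is an orthonormal basis of $H$, then $\tau_i(H)=\sum_j\psi_j(i)^2$ and $\textsc{FindVector}(H,i)$ returns $\mathbf{u}=(\sum_j\psi_j(i)\psi_j)/(\sum_j\psi_j(i)^2)$, the vector of $H$ with $\mathbf{u}(i)=1$ and $\|\mathbf{u}\|_2^2=1/\tau_i(H)$. For $\mathbf{v}\in\mathbb{R}^n$ and $S\subseteq[n]$, $\mathbf{v}(S)$ is its restriction to $S$; vectors in $\mathbb{R}^S$ are extended by zero to $\mathbb{R}^n$. Procedure $\textsc{ColumnReductionSampling}$ with parameters $\eta=0.1$, $T=0.9n$, $\gamma=0.0001$,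 $\delta=0.05$: set $\mathbf{x}_0=\vec 0$. For $t=0,\dots,T-1$: let $\mathcal{F}_t=\{i:|\mathbf{x}_t(i)|=1\}$, $\mathcal{D}_t=\{i:|\mathbf{x}_t(i)|\ge1-\eta\}$; let $H_t$ be the subspace of $\mathbb{R}^{[n]\setminus\mathcal{D}_t}$ orthogonal to $\mathbf{x}_t([n]\setminus\mathcal{D}_t)$ and to every $\mathbf{A}(j,[n]\setminus\mathcal{D}_t)$, $j\in[m]$; find the first coordinate $k_t\notin\mathcal{D}_t$ with $\tau_{k_t}(H_t)\ge1-\gamma$ and $|\mathbf{x}_t(k_t)|\le\delta$ (return $\bot$ if none exists); let $\mathbf{u}_t=\textsc{FindVector}(H_t,k_t)$; with $\delta_t=\mathbf{x}_t(k_t)$, set $\mathbf{r}(t+1)=1$ with probability $\frac{1+\delta_t}{2}$ and $\mathbf{r}(t+1)=-1$ otherwise; choose $\alpha_t\in\mathbb{R}$ so that $\mathbf{x}_{t+1}=\mathbf{x}_t+\alpha_t\mathbf{u}_t$ satisfies $\mathbf{x}_{t+1}(k_t)=\mathbf{r}(t+1)$. Return $\mathbf{x}_T$. The sequence $\mathbf{r}\in\{\pm1\}^T$ is the random seed. *)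

(* Defs.v *)
From HB Require Import structures.
From mathcomp Require Import all_boot all_order all_algebra.
From mathcomp Require Import boolp classical_sets reals.
Set Implicit Arguments. Unset Strict Implicit. Unset Printing Implicit Defensive.
Import Order.TTheory GRing.Theory Num.Theory.
Local Open Scope ring_scope.
Local Open Scope classical_set_scope.

(* Vectors of R^n are row vectors 'rV[R]_n; v ord0 i is the entry v(i). *)
Section ColumnReductionSampling.
Variable R : realType.
Variables m n : nat.
Variable A : 'M[R]_(m, n).

Definition crs_eta : R := 1 / 10.
Definition crs_gamma : R := 1 / 10000.
Definition crs_delta : R := 1 / 20.

Definition sqnorm (u : 'rV[R]_n) : R := \sum_(j < n) (u ord0 j) ^+ 2.

(* tau_i(H) = max_{u in H \ {0}} u(i)^2 / ||u||_2^2 (the max exists; we take the sup). *)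
Definition leverage (H : set 'rV[R]_n) (i : 'I_n) : R :=
  sup [set (u ord0 i) ^+ 2 / sqnorm u | u in H `&` [set u | u != 0]].

(* FindVector(H,i): the vector u of H with u(i) = 1 and ||u||^2 = 1/tau_i(H)
   (this vector is unique; it equals (sum_j psi_j(i) psi_j)/(sum_j psi_j(i)^2)
   for any orthonormal basis psi of H). *)
Definition find_vector (H : set 'rV[R]_n) (i : 'I_n) : 'rV[R]_n :=
  xget 0 [set u | H u /\ u ord0 i = 1 /\ sqnorm u = (leverage H i)^-1].

Definition Dset (x : 'rV[R]_n) : {set 'I_n} :=
  [set i | 1 - crs_eta <= `|x ord0 i|].

(* H_t : the subspace of R^{[n] \ D_t} (extended by zero to R^n) orthogonal to
   x_t([n] \ D_t) and to every row A(j, [n] \ D_t). *)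
Definition Hsub (x : 'rV[R]_n) : set 'rV[R]_n :=
  [set v | (forall i, i \in Dset x -> v ord0 i = 0)
         /\ \sum_(i < n | i \notin Dset x) v ord0 i * x ord0 i = 0
         /\ (forall j : 'I_m, \sum_(i < n | i \notin Dset x) A j i * v ord0 i = 0)].

(* k_t : the first coordinate (in the order 0,1,...,n-1) outside D_t with
   tau_k(H_t) >= 1 - gamma and |x_t(k)| <= delta; None encodes bot. *)
Definition pick_k (x : 'rV[R]_n) : option 'I_n :=
  ohead [seq k <- enum 'I_n | (k \notin Dset x)
            && (1 - crs_gamma <= leverage (Hsub x) k)
            && (`|x ord0 k| <= crs_delta)].

Definition sgnb (b : bool) : R := if b then 1 else -1.

(* One iteration with random bit b = r(t+1): returns (k_t, x_{t+1}) where
   x_{t+1} = x_t + alpha_t u_t, alpha_t = r(t+1) - x_t(k_t) (so that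
   x_{t+1}(k_t) = r(t+1), as u_t(k_t) = 1); None encodes bot. *)
Definition crs_step (x : 'rV[R]_n) (b : bool) : option ('I_n * 'rV[R]_n) :=
  match pick_k x with
  | None => None
  | Some k => let u := find_vector (Hsub x) k in
              Some (k, x + (sgnb b - x ord0 k) *: u)
  end.

Fixpoint run_from (x : 'rV[R]_n) (bits : seq bool) : option 'rV[R]_n :=
  match bits with
  | [::] => Some x
  | b :: bs => match crs_step x b with
               | None => None
               | Some (_, x') => run_from x' bs
               end
  end.

(* Probability weight of a seed: bit r(t+1) equals +1 with probability
   (1 + delta_t)/2 and -1 otherwise, delta_t = x_t(k_t). Once the procedure
   has returned bot, the (unused) remaining bits are taken to be fair coins. *)
Fixpoint weight_from (x : 'rV[R]_n) (bits : seq bool) : R :=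
  match bits with
  | [::] => 1
  | b :: bs => match crs_step x b with
               | None => (2^-1) ^+ size bits
               | Some (k, x') => (1 + sgnb b * x ord0 k) / 2 * weight_from x' bs
               end
  end.

Definition crs_run (T : nat) (r : T.-tuple bool) : option 'rV[R]_n :=
  run_from 0 r.

Definition crs_weight (T : nat) (r : T.-tuple bool) : R := weight_from 0 r.

Definition crs_good (T : nat) (r : T.-tuple bool) : bool :=
  match crs_run r with
  | None => false
  | Some x => [forall i, `|x ord0 i| <= 1]
              && (#|[set i | `|x ord0 i| == 1]| == T)
              && (\big[Num.max/0]_(j < m) `|\sum_(i < n) A j i * x ord0 i| == 0)
  end.

End ColumnReductionSampling.

(* Main.v *)
Require Import Defs.
From HB Require Import structures.
From mathcomp Require Import all_boot all_order all_algebra.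
From mathcomp Require Import boolp classical_sets reals.
From mathcomp Require Import sequences exp.
From mathcomp.algebra_tactics Require Import ring lra.
Import Order.TTheory GRing.Theory Num.Theory.
Local Open Scope ring_scope.
Set Implicit Arguments. Unset Strict Implicit. Unset Printing Implicit Defensive.
From mathcomp Require Import zify.
Lemma big_tuple_cons (V : nmodType) (F : seq bool -> V) s :
  \sum_(r : s.+1.-tuple bool) F r = \sum_(b : bool) \sum_(r : s.-tuple bool) F (b :: r).
Proof.
rewrite pair_big /=.
rewrite (reindex (fun p : bool * s.-tuple bool => [tuple of p.1 :: p.2])) /=.
  by apply: eq_bigl => p.
exists (fun r => (thead r, [tuple of behead r])) => [[b r] _ | r _] /=.
  by congr pair; apply: val_inj.
by rewrite -tuple_eta.
Qed.

Lemma big_tuple0 (V : nmodType) (F : seq bool -> V) :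
  \sum_(r : 0.-tuple bool) F r = F [::].
Proof.
rewrite (eq_bigr (fun _ => F [::])); last by move=> r _; rewrite tuple0.
by rewrite sumr_const card_tuple expn0.
Qed.

Section Num.
Variable R : realType.

Lemma expR_le_quad (z : R) : `|z| <= 1/2 -> expR z <= 1 + z + 2 * z ^+ 2.
Proof.
move=> hz.
have h1 : 1 - z <= expR (- z) by have := expR_ge1Dx (- z); rewrite addrC.
have hp : 0 < 1 - z by move: hz; rewrite ler_norml => /andP [_ ?]; lra.
have : expR z * (1 - z) <= 1.
  have := expR_gt0 z => ez.
  have : expR z * (1 - z) <= expR z * expR (- z) by rewrite ler_pM2l.
  by rewrite -expRD subrr expR0.
move=> H.
have hz' : - (1/2) <= z <= 1/2 by rewrite -ler_norml.
case/andP: hz' => hz1 hz2.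
have q : 1 <= (1 - z) * (1 + z + 2 * z ^+ 2) by nra.
nra.
Qed.

Definition lam : R := 1 / 20.
Definition cc : R := 1 / 9990.

Lemma mgf (d S : R) : `|d| <= 1/20 -> 1 <= S -> S <= 10000/9999 ->
  (1 + d) / 2 * expR (lam * ((1 - d) ^+ 2 * S - 1)) +
  (1 - d) / 2 * expR (lam * ((-1 - d) ^+ 2 * S - 1)) <= expR (lam * cc).
Proof.
move=> hd h1 h2.
have : - (1/20) <= d <= 1/20 by rewrite -ler_norml.
case/andP=> hd1 hd2.
set z1 := lam * ((1 - d) ^+ 2 * S - 1).
set z2 := lam * ((-1 - d) ^+ 2 * S - 1).
have b1 : `|z1| <= 1/2.
  rewrite ler_norml /z1 /lam; apply/andP; split; nra.
have b2 : `|z2| <= 1/2.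
  rewrite ler_norml /z2 /lam; apply/andP; split; nra.
apply: (le_trans _ (expR_ge1Dx _)).
have e1 := expR_le_quad b1.
have e2 := expR_le_quad b2.
have w1 : 0 <= (1 + d) / 2 by lra.
have w2 : 0 <= (1 - d) / 2 by lra.
apply: (le_trans (lerD (ler_wpM2l w1 e1) (ler_wpM2l w2 e2))).
rewrite /z1 /z2 /lam /cc.
set e := S - 1.
have he : S = 1 + e by rewrite /e; ring.
have e0 : 0 <= e by rewrite /e; lra.
have e1' : e <= 1/9999 by rewrite /e; lra.
rewrite he.
nra.
Qed.
End Num.
Section Lin.
Variable R : realType.
Variable n : nat.
Implicit Types u v w : 'rV[R]_n.

Definition dot u v : R := \sum_(i < n) u ord0 i * v ord0 i.

Lemma dotC u v : dot u v = dot v u.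
Proof. by apply: eq_bigr => i _; rewrite mulrC. Qed.
Lemma dotDl u v w : dot (u + v) w = dot u w + dot v w.
Proof. by rewrite /dot -big_split; apply: eq_bigr => i _; rewrite !mxE mulrDl. Qed.
Lemma dotBl u v w : dot (u - v) w = dot u w - dot v w.
Proof. by rewrite /dot -sumrB; apply: eq_bigr => i _; rewrite !mxE mulrBl. Qed.
Lemma dotZl a u v : dot (a *: u) v = a * dot u v.
Proof. by rewrite /dot mulr_sumr; apply: eq_bigr => i _; rewrite !mxE mulrA. Qed.
Lemma dotDr u v w : dot w (u + v) = dot w u + dot w v.
Proof. by rewrite dotC dotDl !(dotC w). Qed.
Lemma dotBr u v w : dot w (u - v) = dot w u - dot w v.
Proof. by rewrite dotC dotBl !(dotC w). Qed.
Lemma dotZr a u v : dot v (a *: u) = a * dot v u.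
Proof. by rewrite dotC dotZl dotC. Qed.
Lemma dot0l v : dot 0 v = 0.
Proof. by rewrite /dot big1 // => i _; rewrite mxE mul0r. Qed.
Lemma dot0r v : dot v 0 = 0.
Proof. by rewrite dotC dot0l. Qed.
Lemma dot_suml (I : finType) (f : I -> 'rV[R]_n) v :
  dot (\sum_l f l) v = \sum_l dot (f l) v.
Proof.
rewrite /dot exchange_big /=; apply: eq_bigr => i _.
by rewrite summxE mulr_suml.
Qed.
Lemma dot_sumr (I : finType) (f : I -> 'rV[R]_n) v :
  dot v (\sum_l f l) = \sum_l dot v (f l).
Proof. by rewrite dotC dot_suml; apply: eq_bigr => l _; rewrite dotC. Qed.
Lemma dot_ge0 v : 0 <= dot v v.
Proof. by apply: sumr_ge0 => i _; rewrite -expr2 sqr_ge0. Qed.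
Lemma dot_eq0 v : dot v v = 0 -> v = 0.
Proof.
move=> /eqP; rewrite psumr_eq0 => [/allP H|i _]; last by rewrite -expr2 sqr_ge0.
apply/rowP => i; rewrite mxE.
have := H i (mem_index_enum i); rewrite /= mulf_eq0 orbb => /eqP //.
Qed.
Lemma sqnorm_dot v : sqnorm v = dot v v.
Proof. by apply: eq_bigr => i _; rewrite expr2. Qed.

Lemma cauchy_schwarz u w : dot u w ^+ 2 <= dot u u * dot w w.
Proof.
have [w0|wn0] := eqVneq (dot w w) 0.
  by rewrite (dot_eq0 w0) !dot0r expr0n /= ?mulr0.
have wp : 0 < dot w w by rewrite lt_def wn0 dot_ge0.
set t := dot u w / dot w w.
have e : dot (u - t *: w) (u - t *: w) = dot u u - dot u w ^+ 2 / dot w w.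
  rewrite !(dotBl, dotBr, dotZl, dotZr) (dotC w u) /t.
  by field; rewrite gt_eqF.
have := dot_ge0 (u - t *: w); by rewrite e subr_ge0 ler_pdivrMr // mulrC.
Qed.

Definition orthonormal q (g : 'I_q -> 'rV[R]_n) :=
  forall l l', dot (g l) (g l') = (l == l')%:R.

Lemma gram_schmidt (Z : {set 'I_n}) (L : seq 'rV[R]_n) :
  (forall a, a \in L -> forall i, i \in Z -> a ord0 i = 0) ->
  exists q (g : 'I_q -> 'rV[R]_n),
    [/\ (q <= count (fun a : 'rV[R]_n => a != 0%R) L)%N, orthonormal g,
        (forall l i, i \in Z -> g l ord0 i = 0) &
        (forall v, (forall a, a \in L -> dot v a = 0) <-> (forall l, dot v (g l) = 0))].
Proof.
elim: L => [|a L IH] HZ.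
  exists 0%N, (fun l => 0); split => //; [by case|by case|].
  by move=> v; split => [_ l|_ a //]; exact: dot0r.
have [q [g [Hq Ho HgZ Hsp]]] : exists q (g : 'I_q -> 'rV[R]_n),
    [/\ (q <= count (fun a : 'rV[R]_n => a != 0%R) L)%N, orthonormal g,
        (forall l i, i \in Z -> g l ord0 i = 0) &
        (forall v, (forall a, a \in L -> dot v a = 0) <-> (forall l, dot v (g l) = 0))].
  by apply: IH => b Hb; apply: HZ; rewrite in_cons Hb orbT.
set r := a - \sum_l dot a (g l) *: g l.
have dr : forall l, dot r (g l) = 0.
  move=> l; rewrite /r dotBl dot_suml (bigD1 l) //= big1 ?addr0.
    by rewrite dotZl Ho eqxx mulr1 subrr.
  by move=> l' Hl'; rewrite dotZl Ho (negbTE Hl') mulr0.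
have rZ : forall i, i \in Z -> r ord0 i = 0.
  move=> i Hi; rewrite /r !mxE summxE big1 ?subr0.
    by apply: HZ => //; rewrite mem_head.
  by move=> l _; rewrite mxE HgZ // mulr0.
have Hcons : forall v, (forall b, b \in a :: L -> dot v b = 0) <->
                       dot v a = 0 /\ (forall b, b \in L -> dot v b = 0).
  move=> v; split.
    by move=> H; split => [|b Hb]; apply: H; rewrite ?mem_head // in_cons Hb orbT.
  by move=> [H1 H2] b; rewrite in_cons => /orP [/eqP -> //|]; apply: H2.
have ar : a = r + \sum_l dot a (g l) *: g l by rewrite /r subrK.
have [r0|rn0] := eqVneq r 0.
  exists q, g; split => //.
  - by apply: (leq_trans Hq); rewrite /= leq_addl.
  - move=> v; rewrite Hcons -Hsp; split; first by case.
    move=> H; split => //; rewrite ar r0 add0r dot_sumr big1 // => l _.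
    by rewrite dotZr (proj1 (Hsp v) H l) mulr0.
have rp : 0 < dot r r by rewrite lt_def dot_ge0 andbT; apply/eqP => /dot_eq0; apply/eqP.
set nr := (Num.sqrt (dot r r))^-1 *: r.
have nrr : dot nr nr = 1.
  rewrite /nr dotZl dotZr mulrA -expr2 exprVn sqr_sqrtr ?dot_ge0 //.
  by rewrite mulVf // gt_eqF.
have nrg : forall l, dot nr (g l) = 0 by move=> l; rewrite dotZl dr mulr0.
pose g' := fun l : 'I_q.+1 => if unlift ord_max l is Some l' then g l' else nr.
exists q.+1, g'; split.
- have an0 : a != 0.
    apply: contra rn0 => /eqP a0; apply/eqP; rewrite /r a0 sub0r big1 ?oppr0 //.
    by move=> l _; rewrite dot0l scale0r.
  by rewrite /= an0 add1n ltnS.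
- move=> l l'; rewrite /g'.
  case: unliftP => [j ->|->]; case: unliftP => [j' ->|->].
  + by rewrite Ho (inj_eq lift_inj).
  + by rewrite dotC nrg eq_sym (negbTE (neq_lift _ _)).
  + by rewrite nrg (negbTE (neq_lift _ _)).
  + by rewrite nrr eqxx.
- move=> l i Hi; rewrite /g'; case: unliftP => [j _|_]; first exact: HgZ.
  by rewrite /nr mxE rZ // mulr0.
- move=> v; rewrite Hcons Hsp; split.
  + move=> [Ha Hg] l; rewrite /g'; case: unliftP => [j _|_]; first exact: Hg.
    rewrite /nr dotZr; apply/eqP; rewrite mulf_eq0; apply/orP; right; apply/eqP.
    rewrite /r dotBr Ha dot_sumr big1 ?subrr // => l' _.
    by rewrite dotZr Hg mulr0.
  + move=> H.
    have Hg : forall l, dot v (g l) = 0.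
      by move=> l; have := H (lift ord_max l); rewrite /g' liftK.
    split => //.
    have := H ord_max; rewrite /g' unlift_none /nr dotZr => /eqP.
    rewrite mulf_eq0 invr_eq0 sqrtr_eq0 le_eqVlt ltNge (ltW rp) orbF (gt_eqF rp) /=.
    move=> /eqP Hr; rewrite ar dotDr Hr add0r dot_sumr big1 // => l _.
    by rewrite dotZr Hg mulr0.
Qed.

End Lin.
Local Open Scope classical_set_scope.
Lemma sup_attained (R : realType) (S : set R) v :
  S v -> (forall y, S y -> y <= v) -> sup S = v.
Proof.
move=> Sv ub; apply/eqP; rewrite eq_le; apply/andP; split.
  by apply: ge_sup; [exists v|move=> y /ub].
have hs : has_sup S by split; [exists v|exists v => y /ub].
exact: (sup_upper_bound hs).
Qed.
Local Close Scope classical_set_scope.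

Section Lev.
Variable R : realType.
Variables m n : nat.
Variable A : 'M[R]_(m, n).

Definition xr (x : 'rV[R]_n) : 'rV[R]_n :=
  \row_i (if i \in Dset x then 0 else x ord0 i).
Definition ar (x : 'rV[R]_n) (j : 'I_m) : 'rV[R]_n :=
  \row_i (if i \in Dset x then 0 else A j i).
Definition Lx x := xr x :: [seq ar x j | j <- enum 'I_m].

Lemma Hsub_iff x v : Hsub A x v <->
  (forall i, i \in Dset x -> v ord0 i = 0) /\ (forall a, a \in Lx x -> dot v a = 0).
Proof.
have ex : dot v (xr x) = \sum_(i < n | i \notin Dset x) v ord0 i * x ord0 i.
  rewrite big_mkcond; apply: eq_bigr => i _; rewrite mxE.
  by case: ifP => _ /=; rewrite ?mulr0.
have ea : forall j, dot v (ar x j) = \sum_(i < n | i \notin Dset x) A j i * v ord0 i.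
  move=> j; rewrite big_mkcond; apply: eq_bigr => i _; rewrite mxE.
  by case: ifP => _ /=; rewrite ?mulr0 // mulrC.
rewrite /Hsub /=; split.
  move=> [H1 [H2 H3]]; split => // a; rewrite in_cons => /orP [/eqP ->|].
    by rewrite ex.
  by move=> /mapP [j _ ->]; rewrite ea.
move=> [H1 H2]; split => //; split.
  by rewrite -ex; apply: H2; rewrite mem_head.
move=> j; rewrite -ea; apply: H2; rewrite in_cons; apply/orP; right.
by apply/mapP; exists j => //; rewrite mem_enum.
Qed.

Lemma Lx_Z x : forall a, a \in Lx x -> forall i, i \in Dset x -> a ord0 i = 0.
Proof.
move=> a; rewrite in_cons => /orP [/eqP ->|/mapP [j _ ->]] i Hi; by rewrite mxE Hi.
Qed.

Lemma count_Lx x : (count (fun a : 'rV[R]_n => a != 0%R) (Lx x) <= (xr x != 0%R) + m)%N.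
Proof.
rewrite /Lx /= leq_add2l; apply: (leq_trans (count_size _ _)).
by rewrite size_map size_enum_ord.
Qed.

Definition ek (k : 'I_n) : 'rV[R]_n := \row_i (i == k)%:R.
Lemma dot_ek v k : dot v (ek k) = v ord0 k.
Proof.
rewrite /dot (bigD1 k) //= big1 ?addr0; first by rewrite mxE eqxx mulr1.
by move=> i Hi; rewrite mxE (negbTE Hi) mulr0.
Qed.

Lemma lev_struct x : exists s : 'I_n -> R,
  [/\ (forall k, 0 <= s k), (\sum_k s k <= ((xr x != 0%R) + m)%:R),
      (forall k, k \notin Dset x -> leverage (Hsub A x) k = 1 - s k) &
      (forall k, k \notin Dset x -> 0 < 1 - s k ->
         exists u, [/\ Hsub A x u, u ord0 k = 1 & sqnorm u = (1 - s k)^-1])].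
Proof.
have [q [g [Hq Ho HgZ Hsp]]] := gram_schmidt (Lx_Z (x := x)).
pose s k := \sum_l (g l ord0 k) ^+ 2.
have Hug : forall u, Hsub A x u -> forall l, dot u (g l) = 0.
  by move=> u /Hsub_iff [_ H]; apply/Hsp.
have key : forall k, k \notin Dset x -> exists w, [/\ Hsub A x w,
    (forall u, Hsub A x u -> dot u w = u ord0 k), dot w w = 1 - s k & w ord0 k = 1 - s k].
  move=> k Hk; pose w := ek k - \sum_l (g l ord0 k) *: g l.
  have F1 : forall u, Hsub A x u -> dot u w = u ord0 k.
    move=> u Hu; rewrite /w dotBr dot_ek dot_sumr big1 ?subr0 // => l _.
    by rewrite dotZr Hug // mulr0.
  have Hw : Hsub A x w.
    apply/Hsub_iff; split.
      move=> i Hi; rewrite /w !mxE summxE big1.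
        have -> : (i == k) = false by apply/eqP => ik; rewrite -ik Hi in Hk.
        by rewrite subr0.
      by move=> l _; rewrite ?mxE (HgZ l i Hi) mulr0.
    apply/Hsp => l; rewrite /w dotBl dotC dot_ek dot_suml (bigD1 l) //= big1.
      by rewrite dotZl Ho eqxx mulr1 addr0 subrr.
    by move=> l' Hl'; rewrite dotZl Ho (negbTE Hl') mulr0.
  have wk : w ord0 k = 1 - s k.
    rewrite /w !mxE eqxx summxE; congr (_ - _); apply: eq_bigr => l _.
    by rewrite mxE expr2.
  by exists w; split => //; rewrite F1.
exists s; split.
- by move=> k; apply: sumr_ge0 => l _; rewrite sqr_ge0.
- rewrite /s exchange_big /=.
  have -> : \sum_l \sum_i (g l ord0 i) ^+ 2 = \sum_(l < q) (1 : R).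
    apply: eq_bigr => l _; transitivity (dot (g l) (g l)).
      by apply: eq_bigr => i _; rewrite expr2.
    by rewrite Ho eqxx.
  rewrite sumr_const card_ord ler_nat.
  exact: (leq_trans Hq (count_Lx x)).
- move=> k Hk; have [w [Hw F1 ww wk]] := key k Hk.
  have ub : forall u, Hsub A x u -> u != 0 -> u ord0 k ^+ 2 / sqnorm u <= 1 - s k.
    move=> u Hu un0; rewrite sqnorm_dot -F1 // -ww.
    have up : 0 < dot u u by rewrite lt_def dot_ge0 andbT; apply/eqP => /dot_eq0; apply/eqP.
    by rewrite ler_pdivrMr // mulrC cauchy_schwarz.
  have v0 : 0 <= 1 - s k by rewrite -ww dot_ge0.
  rewrite /leverage.
  have [vp|v0'] := boolP (0 < 1 - s k).
    apply: sup_attained.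
      exists w; first split => //.
        by rewrite /=; apply/eqP => w0; move: vp; rewrite -ww w0 dot0r ltxx.
      by rewrite sqnorm_dot ww wk expr2 mulfK // gt_eqF.
    by move=> y [u [Hu un0] <-]; apply: ub.
  have ve : 1 - s k = 0 by apply/eqP; rewrite eq_le v0 andbT leNgt.
  rewrite ve.
  have [[y Sy]|Sn] := pselect ([set (u ord0 k) ^+ 2 / sqnorm u | u in Hsub A x `&` [set u | u != 0]] !=set0)%classic.
    apply: sup_attained.
      suff <- : y = 0 by [].
      case: Sy => u [Hu un0] <-; apply/eqP; rewrite eq_le; apply/andP; split.
        by have := ub u Hu un0; rewrite ve.
      by rewrite divr_ge0 ?sqr_ge0 // sqnorm_dot dot_ge0.
    by move=> z [u [Hu un0] <-]; rewrite -ve ub.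
  suff -> : ([set (u ord0 k) ^+ 2 / sqnorm u | u in Hsub A x `&` [set u | u != 0]] = set0)%classic.
    exact: sup0.
  by apply/seteqP; split => // z Sz; apply: Sn; exists z.
- move=> k Hk vp; have [w [Hw F1 ww wk]] := key k Hk.
  exists ((1 - s k)^-1 *: w); split.
  + move/Hsub_iff: Hw => [H1 H2]; apply/Hsub_iff; split.
      by move=> i Hi; rewrite mxE H1 // mulr0.
    by move=> a Ha; rewrite dotZl H2 // mulr0.
  + by rewrite mxE wk mulVf // gt_eqF.
  + rewrite sqnorm_dot dotZl dotZr ww; field; rewrite gt_eqF //.
Qed.
End Lev.
Section Dyn.
Variable R : realType.
Variables m n : nat.
Variable A : 'M[R]_(m, n).
Implicit Types x : 'rV[R]_n.

Lemma ohead_mem (T : eqType) (s : seq T) k : ohead s = Some k -> k \in s.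
Proof. by case: s => //= a s [<-]; rewrite mem_head. Qed.

Lemma pick_kP x k : pick_k A x = Some k ->
  [/\ k \notin Dset x, 1 - crs_gamma R <= leverage (Hsub A x) k & `|x ord0 k| <= crs_delta R].
Proof.
rewrite /pick_k => /ohead_mem; rewrite mem_filter => /andP [/andP [/andP [h1 h2] h3] _].
by split.
Qed.

Lemma pick_kN x : pick_k A x = None -> forall k, k \notin Dset x ->
  1 - crs_gamma R <= leverage (Hsub A x) k -> crs_delta R < `|x ord0 k|.
Proof.
rewrite /pick_k => H k h1 h2; rewrite ltNge; apply/negP => h3.
have : k \in [seq k <- enum 'I_n | (k \notin Dset x)
            && (1 - crs_gamma R <= leverage (Hsub A x) k)
            && (`|x ord0 k| <= crs_delta R)].
  by rewrite mem_filter h1 h2 h3 mem_enum.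
by move: H; case: [seq _ <- _ | _].
Qed.

Lemma fvD x k i : i \in Dset x -> find_vector (Hsub A x) k ord0 i = 0.
Proof.
move=> Hi; rewrite /find_vector; case: xgetP => [u _ [Hu _]|_]; last by rewrite mxE.
by case: Hu => H _; apply: H.
Qed.

Lemma Hsub_dotx x u : Hsub A x u -> dot x u = 0.
Proof.
move=> [H1 [H2 _]]; rewrite -H2 /dot [RHS]big_mkcond /=; apply: eq_bigr => i _.
by case: ifP => [_|/negbFE Hi]; [rewrite mulrC|rewrite (H1 i Hi) mulr0].
Qed.

Lemma Hsub_Au x u : Hsub A x u -> forall j, \sum_i A j i * u ord0 i = 0.
Proof.
move=> [H1 [_ H3]] j; rewrite -[RHS](H3 j) [RHS]big_mkcond /=; apply: eq_bigr => i _.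
by case: ifP => [_|/negbFE Hi]; [|rewrite (H1 i Hi) mulr0].
Qed.

Lemma sqnorm_step x u a : Hsub A x u ->
  sqnorm (x + a *: u) = sqnorm x + a ^+ 2 * sqnorm u.
Proof.
move=> Hu; have h := Hsub_dotx Hu.
rewrite !sqnorm_dot !(dotDl, dotDr, dotZl, dotZr) (dotC u x) h; ring.
Qed.

Lemma step_facts x k : pick_k A x = Some k ->
  let u := find_vector (Hsub A x) k in
  [/\ k \notin Dset x, `|x ord0 k| <= 1/20, Hsub A x u, u ord0 k = 1 &
     [/\ 1 <= sqnorm u, sqnorm u <= 10000/9999,
      forall j, j != k -> u ord0 j ^+ 2 <= sqnorm u - 1 &
      sqnorm u = (leverage (Hsub A x) k)^-1]].
Proof.
move=> /pick_kP [Hk Hl Hx] u.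
have [s [s0 ssum slev sex]] := lev_struct A x.
rewrite (slev k Hk) /crs_gamma in Hl.
have vp : 0 < 1 - s k by apply: lt_le_trans Hl; lra.
have [w [Hw wk ww]] := sex k Hk vp.
have Pu : Hsub A x u /\ u ord0 k = 1 /\ sqnorm u = (leverage (Hsub A x) k)^-1.
  rewrite /u /find_vector.
  apply: (@xgetPex _ 0 [set u | Hsub A x u /\ u ord0 k = 1 /\ sqnorm u = (leverage (Hsub A x) k)^-1]%classic).
  by exists w; rewrite /= slev.
case: Pu => Hu [uk un0]; have un := un0; rewrite (slev k Hk) in un.
have sk : forall j, j != k -> 1 + u ord0 j ^+ 2 <= sqnorm u.
  move=> j jk; rewrite /sqnorm (bigD1 k) //= uk expr1n lerD2l (bigD1 j) //=.
  by rewrite lerDl sumr_ge0 // => i _; rewrite sqr_ge0.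
split => //.
split.
- by rewrite /sqnorm (bigD1 k) //= uk expr1n lerDl sumr_ge0 // => i _; rewrite sqr_ge0.
- rewrite un -[X in X <= _]mul1r ler_pdivrMr //; lra.
- by move=> j /sk; rewrite lerBrDl.
- by [].
Qed.

Definition Inv (x : 'rV[R]_n) (t : nat) :=
  [/\ forall i, `|x ord0 i| = 1 \/ `|x ord0 i| < 19/20,
      #|[set i | `|x ord0 i| == 1]| = t,
      forall j, \sum_i A j i * x ord0 i = 0 &
      (m = 0%N -> forall i, `|x ord0 i| = 1 \/ x ord0 i = 0)].

Lemma Inv0 : Inv 0 0.
Proof.
split.
- by move=> i; right; rewrite mxE normr0; lra.
- apply/eqP; rewrite cards_eq0; apply/eqP/setP => i; rewrite !inE mxE normr0.
  by rewrite eq_sym oner_eq0.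
- by move=> j; rewrite big1 // => i _; rewrite mxE mulr0.
- by move=> _ i; right; rewrite mxE.
Qed.

Lemma notD_lt x i : i \notin Dset x -> `|x ord0 i| < 9/10.
Proof. by rewrite /Dset inE /crs_eta -ltNge; lra. Qed.

Lemma inD_ge x i : i \in Dset x -> 9/10 <= `|x ord0 i|.
Proof. by rewrite /Dset inE /crs_eta; lra. Qed.

Lemma lev_m0 x : m = 0%N -> (forall i, `|x ord0 i| = 1 \/ x ord0 i = 0) ->
  forall k, k \notin Dset x -> leverage (Hsub A x) k = 1.
Proof.
move=> m0 H k Hk.
have [s [s0 ssum slev sex]] := lev_struct A x.
have xr0 : xr x = 0.
  apply/rowP => i; rewrite !mxE; case: ifP => // Hi.
  case: (H i) => // h; have := notD_lt (negbT Hi); rewrite h; lra.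
rewrite xr0 eqxx m0 /= in ssum.
have : s k <= \sum_i s i by rewrite (bigD1 k) //= lerDl sumr_ge0.
rewrite slev //; move: (s0 k); lra.
Qed.

Lemma Inv_step x t k b : Inv x t -> pick_k A x = Some k ->
  Inv (x + (sgnb R b - x ord0 k) *: find_vector (Hsub A x) k) t.+1.
Proof.
move=> [Ia Ib Ic Id] Hp.
have [Hk xk Hu uk [S1 S2 Uj Sl]] := step_facts Hp.
set u := find_vector (Hsub A x) k in Hu uk S1 S2 Uj Sl *.
have sb : `|sgnb R b| = 1 by case: b; rewrite /= ?normrN normr1.
set a := sgnb R b - x ord0 k.
have ha : `|a| <= 21/20.
  rewrite /a; apply: (le_trans (ler_normB _ _)); rewrite sb; lra.
have newk : (x + a *: u) ord0 k = sgnb R b by rewrite !mxE uk mulr1 /a subrKC.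
have newD : forall i, i \in Dset x -> (x + a *: u) ord0 i = x ord0 i.
  by move=> i Hi; rewrite !mxE (fvD k Hi) mulr0 addr0.
have uj : forall j, j != k -> `|u ord0 j| <= 1/99.
  move=> j jk; have h := Uj j jk.
  have h2 : u ord0 j ^+ 2 <= 1 / 9999 by lra.
  rewrite ler_norml; apply/andP; split; nra.
have newO : forall i, i \notin Dset x -> i != k -> `|(x + a *: u) ord0 i| < 19/20.
  move=> i Hi ik; rewrite !mxE; apply: (le_lt_trans (ler_normD _ _)).
  rewrite normrM; have := notD_lt Hi => h1.
  have h2 : `|a| * `|u ord0 i| <= 21/20 * (1/99).
    by apply: ler_pM => //; apply: uj.
  lra.
have Fset : [set i | `|(x + a *: u) ord0 i| == 1] = k |: [set i | `|x ord0 i| == 1].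
  apply/setP => i; rewrite !inE.
  have [->|ik] := eqVneq i k; first by rewrite newk sb eqxx.
  have [Hi|Hi] := boolP (i \in Dset x); first by rewrite newD.
  have := newO i Hi ik; have := notD_lt Hi; move=> h1 h2.
  have e1 : `|(x + a *: u) ord0 i| < 1 by lra.
  have e2 : `|x ord0 i| < 1 by lra.
  by rewrite (lt_eqF e1) (lt_eqF e2).
split.
- move=> i; have [->|ik] := eqVneq i k; first by left; rewrite newk.
  have [Hi|Hi] := boolP (i \in Dset x); first by rewrite newD.
  by right; apply: newO.
- rewrite Fset cardsU1 Ib inE.
  suff -> : `|x ord0 k| == 1 = false by [].
  by apply/negbTE; rewrite neq_lt; apply/orP; left; lra.
- move=> j; have h1 := Ic j; have h2 := Hsub_Au Hu j.
  transitivity (\sum_i A j i * x ord0 i + a * \sum_i A j i * u ord0 i); last first.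
    by rewrite h1 h2 mulr0 addr0.
  rewrite mulr_sumr -big_split; apply: eq_bigr => i _ /=; rewrite !mxE; ring.
- move=> m0.
  have lev1 := lev_m0 m0 (Id m0) Hk.
  have hk0 : x ord0 k = 0.
    case: (Id m0 k) => // h; move: xk; rewrite h; lra.
  have un1 : sqnorm u = 1.
    by rewrite Sl lev1 invr1.
  move=> i; have [->|ik] := eqVneq i k; first by left; rewrite newk.
  have [Hi|Hi] := boolP (i \in Dset x); first by rewrite newD //; apply: Id.
  have : u ord0 i ^+ 2 <= 0 by rewrite -(subrr 1) -{1}un1; apply: Uj.
  move=> h; have ui : u ord0 i = 0.
    by apply/eqP; rewrite -sqrf_eq0 eq_le h sqr_ge0.
  by rewrite !mxE ui mulr0 addr0; apply: Id.
Qed.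
End Dyn.
Section Prob.
Variable R : realType.
Variables m n : nat.
Variable A : 'M[R]_(m, n).
Implicit Types x : 'rV[R]_n.

Lemma sum_ind (P : pred 'I_n) : \sum_i ((P i)%:R : R) = #|[set i | P i]|%:R.
Proof.
rewrite -sum1_card natr_sum [RHS]big_mkcond /=; apply: eq_bigr => i _.
by rewrite inE; case: (P i).
Qed.

Lemma sq_abs (y : R) : y ^+ 2 = `|y| ^+ 2.
Proof. by rewrite real_normK ?num_real. Qed.

Lemma threshold x t : 10 ^+ 6 * m%:R <= n%:R :> R -> Inv A x t ->
  (t < (9 * n) %/ 10)%N -> pick_k A x = None ->
  (m != 0)%N /\ n%:R / 5000 <= sqnorm x - t%:R.
Proof.
move=> hmn [Ia Ib Ic Id] ht hp.
have hN := pick_kN hp.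
have [s [s0 ssum slev sex]] := lev_struct A x.
have t10 : (t * 10 <= 9 * n)%N.
  apply: (leq_trans _ (leq_divM (9 * n) 10)); rewrite leq_mul2r /=; exact: ltnW.
have tn : (t < n)%N by lia.
have [m0|mn0] := eqVneq m 0%N.
  exfalso.
  have [i Hi] : exists i, i \notin Dset x.
    apply/existsP; apply: contraT; rewrite negb_exists => /forallP Hall.
    have : [set i | `|x ord0 i| == 1] = [set: 'I_n].
      apply/setP => i; rewrite !inE; have := Hall i; rewrite negbK => /inD_ge.
      case: (Id m0 i) => ->; first by rewrite eqxx.
      rewrite normr0; lra.
    move=> e; move: Ib; rewrite e cardsT card_ord => tn'.
    by move: tn; rewrite tn' ltnn.
  have xi : x ord0 i = 0.
    case: (Id m0 i) => // h; have := notD_lt Hi; rewrite h; lra.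
  have := hN i Hi; rewrite (lev_m0 A m0 (Id m0) Hi) xi normr0 /crs_gamma /crs_delta.
  move=> h; have h2 : 1 - 1/10000 <= 1 :> R by lra.
  have := h h2; lra.
split => //.
have pw : forall i, 1 <= ((`|x ord0 i| == 1)%:R : R) +
    400 * (((`|x ord0 i| != 1)%:R : R) * x ord0 i ^+ 2) + 10000 * s i.
  move=> i; have si := s0 i.
  have [e1|e1] := eqVneq `|x ord0 i| 1.
    rewrite /= ?mulr1n ?mulr0n; have := sqr_ge0 (x ord0 i); lra.
  rewrite /= ?mulr1n ?mulr0n mul1r.
  have [Hi|Hi] := boolP (i \in Dset x).
    have := inD_ge Hi => h; rewrite sq_abs.
    have : 81/100 <= `|x ord0 i| ^+ 2 by rewrite expr2; nra.
    lra.
  have := hN i Hi; rewrite (slev i Hi) /crs_gamma /crs_delta => h.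
  have [hl|hl] := lerP (1 - 1/10000) (1 - s i).
    have := h hl => h'; rewrite sq_abs.
    have : 1/400 <= `|x ord0 i| ^+ 2 by rewrite expr2; nra.
    lra.
  have := sqr_ge0 (x ord0 i); lra.
have sumpw : \sum_(i < n) (1 : R) <= \sum_i (((`|x ord0 i| == 1)%:R : R) +
    400 * (((`|x ord0 i| != 1)%:R : R) * x ord0 i ^+ 2) + 10000 * s i).
  by apply: ler_sum => i _; apply: pw.
rewrite big_split /= big_split /= -!mulr_sumr sum_ind Ib sumr_const card_ord in sumpw.
have sq : sqnorm x = t%:R + \sum_i (((`|x ord0 i| != 1)%:R : R) * x ord0 i ^+ 2).
  rewrite -Ib -sum_ind -big_split /=; apply: eq_bigr => i _.
  have [e1|e1] := eqVneq `|x ord0 i| 1; last by rewrite /= ?mulr1n ?mulr0n add0r mul1r.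
  by rewrite /= ?mulr1n ?mulr0n mul0r addr0 sq_abs e1 expr1n.
have hs : \sum_i s i <= 1 + m%:R.
  apply: (le_trans ssum); rewrite natrD lerD2r.
  by case: (xr x != 0%R).
have m1 : 1 <= m%:R :> R by rewrite ler1n lt0n.
have tr : t%:R * 10 <= 9 * n%:R :> R.
  have : ((t * 10)%:R <= (9 * n)%:R :> R) by rewrite ler_nat.
  by rewrite !natrM.
move: sumpw; rewrite sq; set Q := \sum_i _.
rewrite -[1 *+ n]/(n%:R) => h.
lra.
Qed.

End Prob.
Section Prob2.
Variable R : realType.
Variables m n : nat.
Variable A : 'M[R]_(m, n).
Implicit Types x : 'rV[R]_n.

Definition Pb x s := \sum_(r : s.-tuple bool) weight_from A x r * (run_from A x r == None)%:R.

Lemma weight_sum s : forall x, \sum_(r : s.-tuple bool) weight_from A x r = 1.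
Proof.
elim: s => [|s IH] x; first by rewrite big_tuple0.
rewrite big_tuple_cons /= /crs_step.
case: (pick_k A x) => [k|].
  rewrite big_bool /= -!mulr_sumr !IH /=; lra.
have e : \sum_(r : s.-tuple bool) (2^-1 : R) ^+ (size r).+1 = 2^-1.
  rewrite (eq_bigr (fun _ => (2^-1 : R) ^+ s.+1)); last first.
    by move=> r _; rewrite size_tuple.
  rewrite sumr_const card_tuple card_bool -[_ *+ (2 ^ s)]mulr_natr natrX exprS -mulrA -exprMn.
  by rewrite mulVf ?expr1n ?mulr1 // pnatr_eq0.
rewrite big_bool /= !e; lra.
Qed.

Lemma step_ineq (P t s d S th : R) : `|d| <= 1/20 -> 1 <= S -> S <= 10000/9999 ->
  (1 + 1 * d) / 2 * expR (lam R * (P + (1 - d) ^+ 2 * S - (t + 1) + cc R * s - th)) +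
  (1 + -1 * d) / 2 * expR (lam R * (P + (-1 - d) ^+ 2 * S - (t + 1) + cc R * s - th))
  <= expR (lam R * (P - t + cc R * (s + 1) - th)).
Proof.
move=> hd h1 h2.
set E0 := expR (lam R * (P - t + cc R * s - th)).
have -> : expR (lam R * (P + (1 - d) ^+ 2 * S - (t + 1) + cc R * s - th)) =
    E0 * expR (lam R * ((1 - d) ^+ 2 * S - 1)) by rewrite /E0 -expRD; congr expR; ring.
have -> : expR (lam R * (P + (-1 - d) ^+ 2 * S - (t + 1) + cc R * s - th)) =
    E0 * expR (lam R * ((-1 - d) ^+ 2 * S - 1)) by rewrite /E0 -expRD; congr expR; ring.
have -> : expR (lam R * (P - t + cc R * (s + 1) - th)) = E0 * expR (lam R * cc R).
  by rewrite /E0 -expRD; congr expR; ring.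
rewrite mul1r mulN1r.
have -> : (1 + d) / 2 * (E0 * expR (lam R * ((1 - d) ^+ 2 * S - 1))) +
  (1 + - d) / 2 * (E0 * expR (lam R * ((-1 - d) ^+ 2 * S - 1))) =
  E0 * ((1 + d) / 2 * expR (lam R * ((1 - d) ^+ 2 * S - 1)) +
  (1 - d) / 2 * expR (lam R * ((-1 - d) ^+ 2 * S - 1))) by ring.
rewrite ler_wpM2l //; last exact: mgf.
by rewrite /E0 ltW // expR_gt0.
Qed.

Lemma Pb_bound : 10 ^+ 6 * m%:R <= n%:R :> R -> forall s x t, Inv A x t ->
  (t + s <= (9 * n) %/ 10)%N ->
  Pb x s <= (if m == 0%N then 0 else
              expR (lam R * (sqnorm x - t%:R + cc R * s%:R - n%:R / 5000))).
Proof.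
move=> hmn; elim => [|s IH] x t HI Hts.
  rewrite /Pb (big_tuple0 (fun r => weight_from A x r * (run_from A x r == None)%:R)) /= mulr0.
  by case: ifP => _ //; rewrite ltW // expR_gt0.
have W := weight_sum s.+1 x.
rewrite /Pb (big_tuple_cons (fun r => weight_from A x r * (run_from A x r == None)%:R)) /= /crs_step.
rewrite big_tuple_cons /= /crs_step in W.
case E: (pick_k A x) => [k|]; last first.
  under eq_bigr => b _ do under eq_bigr => r _ do rewrite eqxx mulr1.
  rewrite E /= in W; rewrite W.
  have ht : (t < (9 * n) %/ 10)%N by lia.
  have [mn0 hth] := threshold hmn HI ht E.
  rewrite (negbTE mn0); apply: le_trans (expR_ge1Dx _).
  rewrite lerDl; apply: mulr_ge0; first by rewrite /lam; lra.
  have : 0 <= cc R * s.+1%:R by apply: mulr_ge0; rewrite ?ler0n // /cc; lra.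
  lra.
have [Hk xk Hu uk [S1 S2 Uj Sl]] := step_facts E.
set u := find_vector (Hsub A x) k in Hu uk S1 S2 Uj Sl *.
have ht : (t.+1 + s <= (9 * n) %/ 10)%N by rewrite addSnnS.
have I1 := IH _ _ (Inv_step true HI E) ht.
have I2 := IH _ _ (Inv_step false HI E) ht.
rewrite big_bool /=.
under eq_bigr => r _ do rewrite -mulrA.
under [X in _ + X <= _]eq_bigr => r _ do rewrite -mulrA.
rewrite -!mulr_sumr.
have := xk; rewrite ler_norml => /andP [xk1 xk2].
have w1 : 0 <= (1 + 1 * x ord0 k) / 2.
  by rewrite mul1r; clear -xk1 xk2; lra.
have w2 : 0 <= (1 + -1 * x ord0 k) / 2.
  by rewrite mulN1r; clear -xk1 xk2; lra.
apply: le_trans (lerD (ler_wpM2l w1 I1) (ler_wpM2l w2 I2)) _.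
case: ifP => _; first by rewrite !mulr0 addr0.
rewrite !(sqnorm_step _ Hu) -[(t.+1)%:R]natr1 -[(s.+1)%:R]natr1.
exact: step_ineq.
Qed.
End Prob2.
Section Final.
Variable R : realType.
Variables m n : nat.
Variable A : 'M[R]_(m, n).
Implicit Types x : 'rV[R]_n.

Lemma run_Inv (bits : seq bool) : forall x t y, Inv A x t ->
  run_from A x bits = Some y -> Inv A y (t + size bits).
Proof.
elim: bits => [|b bs IH] x t y HI /=; first by case=> <-; rewrite addn0.
rewrite /crs_step; case E: (pick_k A x) => [k|] // H.
by have := IH _ _ _ (Inv_step b HI E) H; rewrite addSnnS.
Qed.

Lemma good_iff (r : ((9 * n) %/ 10).-tuple bool) : crs_good A r = (crs_run A r != None).
Proof.
rewrite /crs_good /crs_run; case E: (run_from A 0 r) => [y|] //=.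
have [Ia Ib Ic Id] := run_Inv (Inv0 A) E.
rewrite size_tuple add0n in Ib.
apply/andP; split; first (apply/andP; split).
- apply/forallP => i; case: (Ia i) => [->|h]; first exact: lexx.
  by apply: ltW; apply: (lt_trans h); lra.
- apply/eqP; rewrite -Ib; apply: eq_card => i; rewrite !inE /=; apply/idP/idP => [/asboolP|h] //; exact/asboolP.
- apply: (big_ind (fun v : R => v == 0)) => //.
    by move=> a b /eqP -> /eqP ->; rewrite maxxx.
  by move=> j _; rewrite Ic normr0.
Qed.

Lemma frozen (bits : seq bool) : forall x y k, `|x ord0 k| = 1 ->
  run_from A x bits = Some y -> y ord0 k = x ord0 k.
Proof.
elim: bits => [|b bs IH] x y k hk /=; first by case=> <-.
rewrite /crs_step; case E: (pick_k A x) => [j|] // H.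
have kD : k \in Dset x by rewrite /Dset inE hk /crs_eta; lra.
have e : (x + (sgnb R b - x ord0 j) *: find_vector (Hsub A x) j) ord0 k = x ord0 k.
  by rewrite !mxE (@fvD R m n A x j k kD) mulr0 addr0.
by rewrite (IH _ _ _ _ H) ?e.
Qed.

Lemma sgnb_neq (c c' : bool) : c != c' -> sgnb R c != sgnb R c'.
Proof.
case: c; case: c' => //= _; rewrite neq_lt; apply/orP.
  by right; lra.
by left; lra.
Qed.

Lemma distinct (bits : seq bool) : forall bits' x y y', size bits = size bits' ->
  bits != bits' -> run_from A x bits = Some y -> run_from A x bits' = Some y' ->
  exists i : 'I_n, `|y ord0 i| = 1 /\ `|y' ord0 i| = 1 /\ y ord0 i != y' ord0 i.
Proof.
elim: bits => [|b bs IH] [|b' bs'] x y y' //= hs hneq.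
rewrite /crs_step; case E: (pick_k A x) => [k|] // H1 H2.
have [Hk xk Hu uk _] := step_facts E.
have [eb|nb] := eqVneq b b'.
  subst b'; apply: (IH bs' _ y y' _ _ H1 H2); first by case: hs.
  by rewrite eqseq_cons eqxx in hneq.
exists k.
have e1 : forall c, (x + (sgnb R c - x ord0 k) *: find_vector (Hsub A x) k) ord0 k = sgnb R c.
  by move=> c; rewrite !mxE uk mulr1 subrKC.
have a1 : forall c, `|sgnb R c| = 1 by case; rewrite /= ?normrN normr1.
have h1 : `|(x + (sgnb R b - x ord0 k) *: find_vector (Hsub A x) k) ord0 k| = 1.
  by rewrite e1 a1.
have h2 : `|(x + (sgnb R b' - x ord0 k) *: find_vector (Hsub A x) k) ord0 k| = 1.
  by rewrite e1 a1.
rewrite (frozen h1 H1) (frozen h2 H2) !e1 !a1.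
split => //; split => //.
exact: sgnb_neq.
Qed.

Lemma pow32 (y : R) : 187/160 <= y -> 100 <= y ^+ 32.
Proof.
move=> hy.
have sq : forall a b z : R, 0 <= a -> a <= z -> b <= a * a -> b <= z ^+ 2.
  by move=> a b z h1 h2 h3; rewrite expr2; nra.
have -> : (32 = 2 * 2 * 2 * 2 * 2)%N by [].
rewrite !exprM.
have y2 : 1365/1000 <= y ^+ 2 by apply: (sq (187/160)) => //; lra.
have y4 : 186/100 <= (y ^+ 2) ^+ 2 by apply: (sq (1365/1000)) => //; lra.
have y8 : 345/100 <= ((y ^+ 2) ^+ 2) ^+ 2 by apply: (sq (186/100)) => //; lra.
have y16 : 119/10 <= (((y ^+ 2) ^+ 2) ^+ 2) ^+ 2 by apply: (sq (345/100)) => //; lra.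
by apply: (sq (119/10)) => //; lra.
Qed.

End Final.

Theorem lemma5p3 (R : realType) (Cstar : R) (m n : nat) (A : 'M[R]_(m, n)) :
  10 ^+ 6 <= Cstar ->
  (forall (j : 'I_m) (i : 'I_n), `|A j i| <= 1) ->
  Cstar * m%:R <= n%:R ->
  let T := ((9 * n) %/ 10)%N in
  99 / 100 <= \sum_(r : T.-tuple bool | crs_good A r) crs_weight A r
  /\ (forall (r r' : T.-tuple bool) (x x' : 'rV[R]_n),
        r != r' -> crs_run A r = Some x -> crs_run A r' = Some x' ->
        exists i : 'I_n, `|x ord0 i| = 1 /\ `|x' ord0 i| = 1 /\ x ord0 i != x' ord0 i).
Proof.
move=> hC hA hn T.
have hmn : 10 ^+ 6 * m%:R <= n%:R :> R.
  by apply: le_trans hn; apply: ler_wpM2r => //; exact: ler0n.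
split; last first.
  move=> r r' x x' hne H1 H2.
  apply: (distinct _ _ H1 H2); first by rewrite !size_tuple.
  by apply: contra hne => /eqP e; apply/eqP/val_inj.
have -> : \sum_(r : T.-tuple bool | crs_good A r) crs_weight A r =
    \sum_(r : T.-tuple bool) crs_weight A r - Pb A 0 T.
  rewrite /Pb /crs_weight big_mkcond /= -sumrB; apply: eq_bigr => r _.
  rewrite good_iff /crs_run; case: (run_from A 0 r) => [y|] /=.
    by rewrite mulr0 subr0.
  by rewrite mulr1 subrr.
rewrite /crs_weight weight_sum.
have PB := Pb_bound hmn (Inv0 A) (leqnn _ : (0 + T <= T)%N).
case: ifP PB => [_|mn0] PB; first by lra.
have s0 : sqnorm (0 : 'rV[R]_n) = 0.
  by rewrite /sqnorm big1 // => i _; rewrite mxE expr0n.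
rewrite s0 sub0r oppr0 add0r in PB.
have m1 : 1 <= m%:R :> R by rewrite ler1n lt0n mn0.
have tr : T%:R * 10 <= 9 * n%:R :> R.
  have : ((T * 10)%:R <= (9 * n)%:R :> R) by rewrite ler_nat leq_divM.
  by rewrite !natrM.
set a := lam R * (n%:R / 5000 - cc R * T%:R).
have ha : 27/5 <= a.
  rewrite /a /lam /cc; clear -hmn m1 tr; nra.
have ea : 100 <= expR a.
  apply: le_trans (_ : expR (27/5) <= _); last by rewrite ler_expR.
  have -> : (27/5 : R) = 32%:R * (27/160) by lra.
  rewrite expRM_natl; apply: pow32.
  by apply: le_trans (expR_ge1Dx _); lra.
have e2 : lam R * (cc R * T%:R - n%:R / 5000) = - a by rewrite /a; ring.
rewrite e2 in PB.
have hp : expR (- a) * expR a = 1 by rewrite -expRD addNr expR0.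
have := expR_gt0 (- a) => hpos.
nra.
Qed.
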